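(* Let $A$ be a DFA over a finite alphabet $\Sigma$ and let $S=s_1,\ldots,s_l$ be any non-empty sequence of strings $s_i\in\Sigma^*$; put $s_0=\lambda$. For any execution of prefix-free IDS on $S$ and each $0\le t\le l$, the hypothesis $M_t$ is compatible with $A$ on $\{\lambda,s_1,\ldots,s_t\}$, i.e. for each $0\le j\le t$: $s_j\in L(A)$ if and only if $\lambda\in E_{i_t}(s_j)$, where $i_t$ is the greatest integer with $K(i_t)=t$.
   Context: Let $A=\langle\Sigma,Q,F,q_0,\delta\rangle$ be a DFA with language $L(A)$; $\lambda$ is the empty string; membership queries to $A$ are answered correctly. Let $d_0$ be a fresh symbol not in $\Sigma^*$; $f(d_0,b)=d_0$, $f(\alpha,b)=\alpha b$ for $\alpha\in\Sigma^*$; $U\oplus V=(U-V)\cup(V-U)$. Refinement procedure (w.r.t. $P'_k$, $T_k$): while there exist $\alpha,\beta\in P'_k$, $b\in\Sigma$ with $E_i(\alpha)=E_i(\beta)$ but $E_i(f(\alpha,b))\neq E_i(f(\beta,b))$: choose (nondeterministically) such $\alpha,\beta,b$ and $\gamma\in E_i(f(\alpha,b))\oplus E_i(f(\beta,b))$, set $v_{i+1}=b\gamma$, increase $i$, and for each $\alpha'\in T_k$ set $E_i(\alpha')=E_{i-1}(\alpha')\cup\{v_i\}$ if $\alpha'v_i\in L(A)$, else $E_i(\alpha')=E_{i-1}(\alpha')$; always $E_i(d_0)=\emptyset$. Construction procedure: states $E_i(\alpha)$, $\alpha\in T_k$; initial state $E_i(\lambda)$; accepting states those containing $\lambda$; for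 $\alpha\in P'_k$: if $E_i(\alpha)=\emptyset$ add self-loops for all $b$, else $\delta(E_i(\alpha),b)=E_i(f(\alpha,b))$; for $\beta\in T_k-P'_k$ with $E_i(\beta)\neq E_i(\alpha)$ for all $\alpha\in P'_k$ and $E_i(\beta)\ne\emptyset$, $\delta(E_i(\beta),b)=\emptyset$ for all $b$. Prefix-free IDS on $S$: initialize $i=k=t=0$, $v_0=\lambda$, $P_0=\{\lambda\}$, $P'_0=P_0\cup\{d_0\}$, $T_0=\{\lambda\}\cup\Sigma$, $E_0(\alpha)=\{\lambda\}$ if $\alpha\in L(A)$ else $\emptyset$ ($\alpha\in T_0$); refine; construct $M_0$. For each string $\alpha$ of $S$ in order: increase $k,t$ by one; $P_k=P_{k-1}\cup\{\alpha\}$, $P'_k=P_k\cup\{d_0\}$, $T_k=T_{k-1}\cup\{\alpha\}\cup\{\alpha b:b\in\Sigma\}$; for $\beta\in T_k-T_{k-1}$ set $E_i(\beta)=\{v_j:0\le j\le i,\beta v_j\in L(A)\}$; refine; set $M_t=M_{t-1}$ if $M_{t-1}$ accepts $\alpha$ iff $\alpha\in L(A)$, else construct $M_t$. $E_n(\alpha)$ denotes the value assigned to $E_i(\alpha)$ while $i=n$. Re-indexing function: $K:\mathbb N\to\mathbb N$ is the unique monotonically increasing function such that $K(n)$ is the least integer $m$ such that the variable $k$ has value $m$ while the variable $i$ has value $n$. *)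

(* Defs.v *)
From mathcomp Require Import all_boot.
Set Implicit Arguments.
Unset Strict Implicit.
Unset Printing Implicit Defensive.

Record dfa (Sigma : finType) := DFA {
  dstate : finType;
  dinit  : dstate;
  dfinal : {set dstate};
  dtrans : dstate -> Sigma -> dstate }.

Definition accepts (Sigma : finType) (A : dfa Sigma) (w : seq Sigma) : Prop :=
  foldl (@dtrans _ A) (dinit A) w \in dfinal A.

(* Elements of P'_k / T_k : a string (Some alpha) or the fresh d_0 (None) *)
Definition felt (Sigma : finType) := option (seq Sigma).

Definition fext (Sigma : finType) (a : felt Sigma) (b : Sigma) : felt Sigma :=
  omap (fun alpha => rcons alpha b) a.

(* State of the variables of prefix-free IDS (the hypothesis M_t plays no
   role in the values of the E_i). *)
Record ids_state (Sigma : finType) := IdsState {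
  st_i : nat;
  st_v : nat -> seq Sigma;
  st_P : seq (seq Sigma);
  st_T : seq (seq Sigma);
  st_E : seq Sigma -> seq Sigma -> Prop }.

Section IDS.
Variables (Sigma : finType) (A : dfa Sigma).

Definition Eo (s : ids_state Sigma) (a : felt Sigma) : seq Sigma -> Prop :=
  match a with None => fun _ => False | Some alpha => st_E s alpha end.

Definition sameset (X Y : seq Sigma -> Prop) : Prop := forall w, X w <-> Y w.

Definition in_symdiff (X Y : seq Sigma -> Prop) (g : seq Sigma) : Prop :=
  (X g /\ ~ Y g) \/ (Y g /\ ~ X g).

Definition inPp (s : ids_state Sigma) (a : felt Sigma) : Prop :=
  match a with None => True | Some alpha => alpha \in st_P s end.

Definition refine_step (s s' : ids_state Sigma) : Prop :=
  exists (a c : felt Sigma) (b : Sigma) (g : seq Sigma),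
    [/\ inPp s a /\ inPp s c,
        sameset (Eo s a) (Eo s c),
        (~ sameset (Eo s (fext a b)) (Eo s (fext c b))),
        in_symdiff (Eo s (fext a b)) (Eo s (fext c b)) g &
        s' = IdsState (st_i s).+1
               (fun j => if j == (st_i s).+1 then b :: g else st_v s j)
               (st_P s) (st_T s)
               (fun a' w => if a' \in st_T s then
                              st_E s a' w \/ (w = b :: g /\ accepts A (a' ++ b :: g))
                            else st_E s a' w)].

Definition refine_terminal (s : ids_state Sigma) : Prop :=
  ~ exists (a c : felt Sigma) (b : Sigma),
      [/\ inPp s a, inPp s c, sameset (Eo s a) (Eo s c) &
          (~ sameset (Eo s (fext a b)) (Eo s (fext c b)))].

(* A complete (terminating) run of the refinement procedure from s to s';
   the list records the successive values taken by the variable i. *)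
Inductive refine_run : ids_state Sigma -> seq nat -> ids_state Sigma -> Prop :=
| rr_done s : refine_terminal s -> refine_run s [:: st_i s] s
| rr_step s s1 iv s' :
    refine_step s s1 -> refine_run s1 iv s' -> refine_run s (st_i s :: iv) s'.

Definition ids_init : ids_state Sigma :=
  IdsState 0 (fun _ => [::]) [:: [::]] ([::] :: [seq [:: b] | b <- enum Sigma])
    (fun alpha w => w = [::] /\ accepts A alpha).

Definition ids_add (s : ids_state Sigma) (alpha : seq Sigma) : ids_state Sigma :=
  IdsState (st_i s) (st_v s) (rcons (st_P s) alpha)
    (st_T s ++ alpha :: [seq rcons alpha b | b <- enum Sigma])
    (fun beta w => if beta \in st_T s then st_E s beta w
                   else exists j, [/\ j <= st_i s, w = st_v s j &
                                      accepts A (beta ++ st_v s j)]).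

(* An execution of prefix-free IDS on S:
   ivals`_t = successive values of i while k = t,
   ends`_t  = the state at the end of stage t (after the refinement). *)
Definition ids_exec (S : seq (seq Sigma)) (ivals : seq (seq nat))
    (ends : seq (ids_state Sigma)) : Prop :=
  [/\ size ivals = (size S).+1, size ends = (size S).+1,
      refine_run ids_init (nth [::] ivals 0) (nth ids_init ends 0) &
      forall t, t < size S ->
        refine_run (ids_add (nth ids_init ends t) (nth [::] S t))
                   (nth [::] ivals t.+1) (nth ids_init ends t.+1)].

(* K(n) = t : t is the least value of k while i has value n. *)
Definition reindexK (ivals : seq (seq nat)) (n t : nat) : Prop :=
  n \in nth [::] ivals t /\ forall t', n \in nth [::] ivals t' -> t <= t'.

Definition is_it (ivals : seq (seq nat)) (t n : nat) : Prop :=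
  reindexK ivals n t /\ forall m, reindexK ivals m t -> m <= n.

End IDS.

(* Main.v *)
Require Import Defs.
From mathcomp Require Import all_boot.

Set Implicit Arguments.
Section Aux.
Variables (Sigma : finType) (A : dfa Sigma).

Definition Inv (s : ids_state Sigma) : Prop :=
  st_v s 0 = [::] /\
  forall a, a \in st_T s -> (st_E s a [::] <-> accepts A a).

Lemma run_T s iv s' : refine_run A s iv s' -> st_T s' = st_T s.
Proof.
elim=> // {}s s1 {}iv {}s' [a [c [b [g [_ _ _ _ ->]]]]] _ ->. by [].
Qed.

Lemma run_inv s iv s' : refine_run A s iv s' -> Inv s -> Inv s'.
Proof.
elim=> // {}s s1 {}iv {}s' [a [c [b [g [_ _ _ _ ->]]]]] _ IH [Hv HE].
apply: IH; split=> //= a' Ha'.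
rewrite Ha'; split.
- by case=> [H|[H _]] //; apply/HE.
- by move=> H; left; apply/HE.
Qed.

Lemma inv_add s al : Inv s -> Inv (ids_add A s al).
Proof.
move=> [Hv HE]; split=> //= beta Hb.
case: ifP => Hin; first by apply: HE.
split.
- by case=> j [_ Hw Ha]; rewrite -Hw cats0 in Ha.
- by move=> H; exists 0; split; rewrite ?Hv ?cats0.
Qed.

Lemma inv_init : Inv (ids_init A).
Proof. split=> //= a _; split; [by case | by split]. Qed.
End Aux.

Theorem mainTheorem6 (Sigma : finType) (A : dfa Sigma) (S : seq (seq Sigma))
    (ivals : seq (seq nat)) (ends : seq (ids_state Sigma)) :
  S != [::] ->
  ids_exec A S ivals ends ->
  forall t n, t <= size S -> is_it ivals t n ->
  forall j, j <= t ->
    (accepts A (nth [::] ([::] :: S) j) <->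
     st_E (nth (ids_init A) ends t) (nth [::] ([::] :: S) j) [::]).
Proof.
move=> _ [_ _ H0 Hs] t n Ht _.
have key : @Inv _ A (nth (ids_init A) ends t) /\
   forall j, j <= t -> nth [::] ([::] :: S) j \in st_T (nth (ids_init A) ends t).
  elim: t Ht => [|t IH] Ht.
    split; first exact: (run_inv H0 (inv_init A)).
    move=> j; rewrite leqn0 => /eqP ->; rewrite (run_T H0) /=.
    by rewrite in_cons eqxx.
  have Hr := Hs t Ht.
  have [Hi Hm] := IH (ltnW Ht).
  split; first exact: (run_inv Hr (inv_add _ Hi)).
  move=> j Hj; rewrite (run_T Hr) /= mem_cat.
  case: (ltngtP j t.+1) Hj => // [Hlt|->] _.
    by rewrite Hm.
  by rewrite /= in_cons eqxx orbT.
move=> j Hj; have [[_ HE] Hm] := key.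
by apply: iff_sym; apply: HE; apply: Hm.
Qed.
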